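(* Consider the problem of minimizing $f(x)$ over $x\in Q$ subject to $g(x)\le0$, where $f,g:Q\to\mathbb{R}$ are convex, and let $x_*$ be a solution. Let $\delta\ge0$, $\varepsilon>0$, suppose $\|\nabla_\delta g(x)\|_*\le M_g$ for all $x\in Q$, let $x^0=\arg\min_{x\in Q}d(x)$ and let $\Theta_0>0$ satisfy $V(x_*,x^0)\le\Theta_0^2$. Run the following Algorithm C: set $I=\emptyset$; for $N=0,1,2,\dots$: if $g(x^N)\le\varepsilon\|\nabla_\delta g(x^N)\|_*+\delta$ (productive step), put $h_N=\varepsilon/\|\nabla_\delta f(x^N)\|_*$, $x^{N+1}=\mathrm{Mirr}_{x^N}(h_N\nabla_\delta f(x^N))$ and add $N$ to $I$; otherwise (non-productive step), put $h_N=\varepsilon/\|\nabla_\delta g(x^N)\|_*$ and $x^{N+1}=\mathrm{Mirr}_{x^N}(h_N\nabla_\delta g(x^N))$. Stop as soon as the total number $N$ of performed iterations satisfies $N\ge 2\Theta_0^2/\varepsilon^2$. Assume that $\nabla_\delta f(x^k)\ne0$ at every productive step. Then, when the algorithm stops, $I\ne\emptyset$ and $$\min_{k\in I}v_f^\delta(x^k,x_* )\le\varepsilon,\qquad \max_{k\in I}g(x^k)\le M_g\varepsilon+\delta.$$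
   Context: $Q\subseteq\mathbb{R}^n$ is closed and convex; $\|\cdot\|$ is a norm on $\mathbb{R}^n$, $\|\cdot\|_*$ its dual norm. For a convex function $\varphi$ on $Q$ and $\delta\ge0$, a $\delta$-subgradient of $\varphi$ at $x\in Q$ is a vector $\nabla_\delta\varphi(x)$ with $\varphi(y)-\varphi(x)\ge\langle\nabla_\delta\varphi(x),y-x\rangle-\delta$ for all $y\in Q$; for each $x$ one such vector is fixed and used throughout. $v_f^\delta(x,y)=\big\langle\nabla_\delta f(x)/\|\nabla_\delta f(x)\|_*,\ x-y\big\rangle$ if $\nabla_\delta f(x)\ne0$ and $v_f^\delta(x,y)=0$ otherwise. $d:Q\to\mathbb{R}$ is differentiable and 1-strongly convex on $Q$ w.r.t. $\|\cdot\|$; $V(y,x)=d(y)-d(x)-\langle\nabla d(x),y-x\rangle$; $\mathrm{Mirr}_x(p)=\arg\min_{u\in Q}\{\langle p,u\rangle+V(u,x)\}$. *)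

(* Defs.v *)
From HB Require Import structures.
From mathcomp Require Import all_boot all_order all_algebra.
From mathcomp Require Import all_classical all_reals all_analysis.
Set Implicit Arguments. Unset Strict Implicit. Unset Printing Implicit Defensive.
Import Order.TTheory GRing.Theory Num.Theory.
Import numFieldNormedType.Exports.
Local Open Scope classical_set_scope.
Local Open Scope ring_scope.

Section Defs.
Variables (R : realType) (n : nat).
Notation vec := 'rV[R]_n.

Definition dotv (p x : vec) : R := \sum_(i < n) p ord0 i * x ord0 i.

Definition is_norm (nrm : vec -> R) : Prop :=
  [/\ forall x, nrm x = 0 -> x = 0,
      forall (a : R) x, nrm (a *: x) = `|a| * nrm x &
      forall x y, nrm (x + y) <= nrm x + nrm y].

Definition dualn (nrm : vec -> R) (p : vec) : R :=
  sup [set dotv p x | x in [set x | nrm x <= 1]].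

Definition convex_on (Q : set vec) (phi : vec -> R) : Prop :=
  forall x y (t : R), Q x -> Q y -> 0 <= t <= 1 ->
    phi (t *: x + (1 - t) *: y) <= t * phi x + (1 - t) * phi y.

Definition is_dsubgrad (Q : set vec) (phi : vec -> R) (delta : R) (x s : vec) :=
  forall y, Q y -> phi y - phi x >= dotv s (y - x) - delta.

Definition bregman (d : vec -> R) (y x : vec) : R :=
  d y - d x - 'd d x (y - x).

Definition strongly_convex_prox (Q : set vec) (nrm : vec -> R) (d : vec -> R) :=
  (forall x, Q x -> differentiable d x) /\
  (forall x y, Q x -> Q y -> d y >= d x + 'd d x (y - x) + (nrm (y - x))^+2 / 2).

Definition is_mirr (Q : set vec) (d : vec -> R) (x p y : vec) : Prop :=
  Q y /\ forall u, Q u -> dotv p y + bregman d y x <= dotv p u + bregman d u x.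

Definition vfd (nrm : vec -> R) (gf : vec -> vec) (x y : vec) : R :=
  if gf x == 0 then 0 else dotv ((dualn nrm (gf x))^-1 *: gf x) (x - y).

End Defs.

(* Main.v *)
Require Import Defs.
From HB Require Import structures.
From mathcomp Require Import all_boot all_order all_algebra.
From mathcomp Require Import all_classical all_reals all_analysis.
From mathcomp Require Import ring lra.
Import Order.TTheory GRing.Theory Num.Theory.
Import numFieldNormedType.Exports.
Local Open Scope classical_set_scope.
Local Open Scope ring_scope.
Set Implicit Arguments. Unset Strict Implicit.

Lemma dotvDr (R : realType) n (p x y : 'rV[R]_n) : dotv p (x + y) = dotv p x + dotv p y.
Proof. by rewrite /dotv -big_split; apply: eq_bigr => i _; rewrite mxE mulrDr. Qed.
Lemma dotvZr (R : realType) n (p x : 'rV[R]_n) a : dotv p (a *: x) = a * dotv p x.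
Proof. by rewrite /dotv mulr_sumr; apply: eq_bigr => i _; rewrite mxE mulrCA. Qed.
Lemma dotvZl (R : realType) n (p x : 'rV[R]_n) a : dotv (a *: p) x = a * dotv p x.
Proof. by rewrite /dotv mulr_sumr; apply: eq_bigr => i _; rewrite mxE mulrA. Qed.
Lemma dotvNr (R : realType) n (p x : 'rV[R]_n) : dotv p (- x) = - dotv p x.
Proof. by rewrite -scaleN1r dotvZr mulN1r. Qed.
Lemma dotvBr (R : realType) n (p x y : 'rV[R]_n) : dotv p (x - y) = dotv p x - dotv p y.
Proof. by rewrite dotvDr dotvNr. Qed.
Lemma dotv0r (R : realType) n (p : 'rV[R]_n) : dotv p 0 = 0.
Proof. by rewrite -(scale0r 0) dotvZr mul0r. Qed.
Lemma dotv_gt0 (R : realType) n (p : 'rV[R]_n) : p != 0 -> 0 < dotv p p.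
Proof.
move=> p0; have [i pi0] : exists i, p ord0 i != 0.
  apply/existsP; apply: contraNT p0 => /existsPn H; apply/eqP/matrixP => a b.
  by rewrite (ord1 a) mxE; apply/eqP/negbNE/H.
rewrite /dotv (bigD1 i) //=.
have h1 : 0 < p ord0 i * p ord0 i by rewrite lt_def -expr2 sqr_ge0 mulf_neq0 ?andbT.
have h2 : 0 <= \sum_(j < n | j != i) p ord0 j * p ord0 j.
  by apply: sumr_ge0 => j _; by rewrite -expr2 sqr_ge0.
lra.
Qed.

Lemma nrm0 (R : realType) n (nrm : 'rV[R]_n -> R) : is_norm nrm -> nrm 0 = 0.
Proof. by case=> _ hZ _; rewrite -(scale0r (0:'rV[R]_n)) hZ normr0 mul0r. Qed.
Lemma nrmN (R : realType) n (nrm : 'rV[R]_n -> R) x : is_norm nrm -> nrm (- x) = nrm x.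
Proof. by case=> _ hZ _; rewrite -scaleN1r hZ normrN normr1 mul1r. Qed.
Lemma nrm_ge0 (R : realType) n (nrm : 'rV[R]_n -> R) x : is_norm nrm -> 0 <= nrm x.
Proof.
move=> hn; have := hn; case=> _ _ hT; have := hT x (- x).
by rewrite subrr nrm0 // nrmN //; lra.
Qed.
Lemma nrm_sum (R : realType) n (nrm : 'rV[R]_n -> R) (I : finType) (F : I -> 'rV[R]_n) :
  is_norm nrm -> nrm (\sum_i F i) <= \sum_i nrm (F i).
Proof.
move=> hn; have := hn; case=> _ _ hT.
elim/big_rec2: _ => [|i y1 y2 _ H]; first by rewrite nrm0.
exact: le_trans (hT _ _) (lerD (lexx _) H).
Qed.
Lemma coord_le (R : realType) n (x : 'rV[R]_n) i : `|x ord0 i| <= `|x|.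
Proof.
have /mapP[j Hj ->] : `|x ord0 i| \in [seq `|x y.1 y.2| | y : 'I_1 * 'I_n].
  by apply/mapP; exists (ord0, i) => //=; rewrite mem_enum.
by rewrite [leRHS]/Num.norm /= mx_normrE; apply/bigmax_geP; right => /=; exists j.
Qed.
Lemma nrm_upper (R : realType) n (nrm : 'rV[R]_n -> R) :
  is_norm nrm -> exists C, 0 <= C /\ forall x, nrm x <= C * `|x|.
Proof.
move=> hn; have := hn; case=> _ hZ _.
exists (\sum_i nrm (delta_mx (ord0 : 'I_1) i)); split.
  by apply: sumr_ge0 => i _; exact: nrm_ge0.
move=> x; rewrite {1}(matrix_sum_delta x) big_ord1 mulr_suml.
apply: le_trans; first exact: (nrm_sum (fun j => x ord0 j *: delta_mx ord0 j) hn).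
apply: ler_sum => i _.
by rewrite hZ mulrC ler_wpM2l ?nrm_ge0 // coord_le.
Qed.
Lemma nrm_lip (R : realType) n (nrm : 'rV[R]_n -> R) x y :
  is_norm nrm -> `|nrm x - nrm y| <= nrm (x - y).
Proof.
move=> hn; have := hn; case=> _ _ hT.
have h1 := hT (x - y) y; have h2 := hT (y - x) x.
rewrite subrK in h1; rewrite subrK in h2.
have : nrm (y - x) = nrm (x - y) by rewrite -opprB nrmN.
move=> e; rewrite ler_norml; lra.
Qed.
Lemma nrm_cont (R : realType) n (nrm : 'rV[R]_n -> R) :
  is_norm nrm -> continuous nrm.
Proof.
move=> hn; have [C [C0 hC]] := nrm_upper hn.
move=> x; apply/(@cvgrPdist_lt _ _ _ (nbhs x) (nbhs_filter x)) => e e0.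
have e1 : 0 < e / (C + 1) by rewrite divr_gt0 // ltr_wpDl.
apply/nbhs_ballP; exists (e/(C+1)) => //= t; rewrite -ball_normE /ball_ /= => ht.
apply: le_lt_trans (nrm_lip _ _ hn) _.
apply: le_lt_trans (hC _) _.
have : C * `|x - t| <= C * (e / (C + 1)) by rewrite ler_wpM2l // ltW.
move/le_lt_trans; apply.
rewrite mulrA ltr_pdivrMr ?ltr_wpDl //.
rewrite mulrC ltr_pM2l //; lra.
Qed.
Lemma nrm_lower (R : realType) n (nrm : 'rV[R]_n -> R) :
  is_norm nrm -> exists c, 0 < c /\ forall x, c * `|x| <= nrm x.
Proof.
move=> hn; have := hn; case=> hdef hZ _.
pose S := [set x : 'rV[R]_n | `|x| = 1].
have Sx x : x != 0 -> S (`|x|^-1 *: x).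
  move=> x0; rewrite /S /= normrZ normrV ?unitfE ?normr_eq0 // normr_id mulVf //.
  by rewrite normr_eq0.
have [[c0 Sc0]|S0] := pselect (S !=set0); last first.
  exists 1; split => // x; rewrite mul1r.
  have [->|x0] := eqVneq x 0; first by rewrite normr0 nrm_ge0.
  by exfalso; apply: S0; exists (`|x|^-1 *: x); exact: Sx.
have cS : compact S.
  apply: (@bounded_closed_compact R n S).
    rewrite /= /bounded_near; near=> M => y Sy /=.
    rewrite Sy; near: M; exact: nbhs_pinfty_ge.
  have -> : S = (fun x : 'rV[R]_n => `|x|) @^-1` [set y : R | y = 1] by [].
  apply: preimage_closed; last exact: closed_eq.
  by move=> y _; exact: norm_continuous.
have [m mS hm] := compact_EVT_min (ex_intro _ c0 Sc0) cS (continuous_subspaceT (nrm_cont hn)).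
have m0 : m != 0.
  by apply/eqP => m0; move: mS; rewrite inE /S /= m0 normr0 => /esym/eqP; rewrite oner_eq0.
have nm0 : 0 < nrm m.
  rewrite lt_def nrm_ge0 // andbT; apply/eqP => /hdef; exact/eqP.
exists (nrm m); split => // x.
have [->|x0] := eqVneq x 0; first by rewrite normr0 mulr0 nrm_ge0.
have := hm _ (mem_set (Sx x x0)); rewrite hZ normrV ?unitfE ?normr_eq0 // normr_id.
have xp : 0 < `|x| by rewrite normr_gt0.
by rewrite ler_pdivlMl // mulrC.
Unshelve. all: by end_near.
Qed.
Lemma dual_hassup (R : realType) n (nrm : 'rV[R]_n -> R) s :
  is_norm nrm -> has_sup [set dotv s x | x in [set x | nrm x <= 1]].
Proof.
move=> hn; have [c [c0 hc]] := nrm_lower hn.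
split; first by exists 0, 0 => //=; [rewrite nrm0 // | rewrite dotv0r].
exists ((\sum_i `|s ord0 i|) / c) => _ [x /= hx <-].
have h1 : dotv s x <= (\sum_i `|s ord0 i|) * `|x|.
  rewrite /dotv mulr_suml; apply: ler_sum => i _.
  apply: le_trans (ler_norm _) _; rewrite normrM; apply: ler_wpM2l => //; exact: coord_le.
apply: le_trans h1 _; rewrite ler_pdivlMr // -mulrA; apply: ler_piMr.
  by apply: sumr_ge0 => i _.
by rewrite mulrC; apply: le_trans (hc x) hx.
Qed.
Lemma dual_le (R : realType) n (nrm : 'rV[R]_n -> R) s z :
  is_norm nrm -> dotv s z <= dualn nrm s * nrm z.
Proof.
move=> hn; have := hn; case=> hdef hZ _.
have [->|z0] := eqVneq z 0; first by rewrite dotv0r nrm0 // mulr0.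
have nz : 0 < nrm z by rewrite lt_def nrm_ge0 // andbT; apply/eqP => /hdef; exact/eqP.
have : dotv s ((nrm z)^-1 *: z) <= dualn nrm s.
  apply: sup_upper_bound; first exact: dual_hassup.
  exists ((nrm z)^-1 *: z) => //=; rewrite hZ ger0_norm ?invr_ge0 ?nrm_ge0 //.
  by rewrite mulVf // gt_eqF.
by rewrite dotvZr ler_pdivrMl // mulrC.
Qed.
Lemma dual_pos (R : realType) n (nrm : 'rV[R]_n -> R) s :
  is_norm nrm -> s != 0 -> 0 < dualn nrm s.
Proof.
move=> hn s0; have := hn; case=> hdef hZ _.
have nz : 0 < nrm s by rewrite lt_def nrm_ge0 // andbT; apply/eqP => /hdef; exact/eqP.
apply: lt_le_trans (_ : 0 < dotv s ((nrm s)^-1 *: s)) _.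
  by rewrite dotvZr mulr_gt0 ?invr_gt0 // dotv_gt0.
apply: sup_upper_bound; first exact: dual_hassup.
exists ((nrm s)^-1 *: s) => //=; rewrite hZ ger0_norm ?invr_ge0 ?nrm_ge0 //.
by rewrite mulVf // gt_eqF.
Qed.
Lemma aux_ineq (R : realType) (a b e : R) : -(a - e) <= b -> 0 <= a + b - e.
Proof. lra. Qed.
Lemma mirr_var (R : realType) n (Q : set 'rV[R]_n) (d : 'rV[R]_n -> R) x p y u :
  convex_set Q -> (forall z, Q z -> differentiable d z) -> is_mirr Q d x p y -> Q u ->
  0 <= dotv p (u - y) + 'd d y (u - y) - 'd d x (u - y).
Proof.
move=> cQ dQ [Qy hy] Qu.
set w := u - y.
set c := dotv p w - 'd d x w.
have key t : 0 < t -> t < 1 -> - c <= t^-1 * (d (t *: w + y) - d y).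
  move=> t0 t1.
  have Qz : Q (t *: w + y).
    have := cQ u y (Itv01 (ltW t0) (ltW t1)) (mem_set Qu) (mem_set Qy).
    rewrite inE; congr Q.
    rewrite /conv /= /unstable.onem /w scalerBr scalerBl scale1r.
    by rewrite addrCA [LHS]addrC.
  have := hy _ Qz; rewrite /bregman.
  have e1 : 'd d x (t *: w + y - x) = t * 'd d x w + 'd d x (y - x).
    by rewrite -addrA linearD linearZ.
  rewrite e1 dotvDr dotvZr ler_pdivlMl // /c => h.
  nra.
have dy := dQ y Qy.
have h1 := diff_derivable (v:=w) dy.
rewrite /derivable in h1.
have h2 := cvg_dnbhs_at_right h1.
have h3 : (- c <= lim ((fun h : R => h^-1 *: ((d \o shift y) (h *: w) - d y)) @ 0^')).
  apply: (cvgr_to_ge h2).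
  near=> t.
  rewrite /=.
  apply: key.
    by near: t; exact: nbhs_right_gt.
  by near: t; apply: nbhs_right_lt; exact: ltr01.
have h4 : derive d y w = 'd d y w := deriveE w dy.
rewrite /derive in h4. rewrite h4 /c in h3.

exact: aux_ineq h3.
Unshelve. all: by end_near.
Qed.
Lemma breg_id (R : realType) n (d : 'rV[R]_n -> R) x y u :
  bregman d u x - bregman d u y - bregman d y x = 'd d y (u - y) - 'd d x (u - y).
Proof.
rewrite /bregman.
generalize ('d d x) ('d d y) => Lx Ly.
have e : Lx (u - x) = Lx (u - y) + Lx (y - x).
  by rewrite -linearD addrA subrK.
rewrite e.
generalize (Lx (u - y)) (Lx (y - x)) (Ly (u - y)) (d u) (d x) (d y) => a b c p q r.
lra.
Qed.
Lemma breg_sc (R : realType) n (Q : set 'rV[R]_n) (nrm : 'rV[R]_n -> R) (d : 'rV[R]_n -> R) x y :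
  strongly_convex_prox Q nrm d -> Q x -> Q y -> nrm (y - x) ^+ 2 / 2 <= bregman d y x.
Proof.
case=> _ sc Qx Qy; have := sc x y Qx Qy; rewrite /bregman.
generalize ('d d x) => A; lra.
Qed.
Lemma step_ineq (R : realType) n (Q : set 'rV[R]_n) (nrm : 'rV[R]_n -> R)
  (d : 'rV[R]_n -> R) x s y u eps :
  convex_set Q -> is_norm nrm -> strongly_convex_prox Q nrm d ->
  Q x -> Q u -> 0 < dualn nrm s -> 0 < eps ->
  is_mirr Q d x ((eps / dualn nrm s) *: s) y ->
  (eps / dualn nrm s) * dotv s (x - u) <=
    bregman d u x - bregman d u y + eps ^+ 2 / 2.
Proof.
move=> cQ hn hsc Qx Qu ds e0 hm.
have Qy := hm.1.
have hv := mirr_var cQ hsc.1 hm Qu.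
have id1 := breg_id d x y u.
have hVyx := breg_sc hsc Qx Qy.
have hdl := dual_le s (x - y) hn.
have hxy : nrm (x - y) = nrm (y - x) by rewrite -opprB nrmN.
have e1 : (eps / dualn nrm s) * dotv s (x - u) =
   (eps / dualn nrm s) * dotv s (x - y) - dotv ((eps / dualn nrm s) *: s) (u - y).
  rewrite dotvZl -mulrBr; congr (_ * _).
  by rewrite -dotvBr; congr dotv; rewrite opprB addrA subrK.
rewrite e1.
have e2 : (eps / dualn nrm s) * dualn nrm s = eps by rewrite mulfVK // gt_eqF.
have hp : 0 <= eps / dualn nrm s by rewrite divr_ge0 // ltW.
have h3 : (eps / dualn nrm s) * dotv s (x - y) <= eps * nrm (y - x).
  by have := ler_wpM2l hp hdl; rewrite mulrA e2 hxy.
move: hv id1 h3 hVyx.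
generalize ('d d y) ('d d x) => A B.
generalize (dotv ((eps / dualn nrm s) *: s) (u - y)) ((eps / dualn nrm s) * dotv s (x - y)) => a b.
generalize (bregman d u x) (bregman d u y) (bregman d y x) (nrm (y - x)) => p q r t.
move=> h1 h2 h3 h4.
have h5 : 0 <= (eps - t) ^+ 2 by apply: sqr_ge0.
nra.
Qed.
Lemma dual_ge0 (R : realType) n (nrm : 'rV[R]_n -> R) s :
  is_norm nrm -> 0 <= dualn nrm s.
Proof.
move=> hn; apply: sup_upper_bound; first exact: dual_hassup.
by exists 0 => //=; [rewrite nrm0 | rewrite dotv0r].
Qed.

Unset Implicit Arguments.
Theorem theorem3 (R : realType) (n : nat) (Q : set 'rV[R]_n)
  (nrm : 'rV[R]_n -> R) (d f g : 'rV[R]_n -> R) (gf gg : 'rV[R]_n -> 'rV[R]_n)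
  (delta eps Mg Theta0 : R) (xstar : 'rV[R]_n) (xs : nat -> 'rV[R]_n) (N : nat) :
  closed Q -> convex_set Q -> is_norm nrm ->
  strongly_convex_prox Q nrm d ->
  convex_on Q f -> convex_on Q g ->
  0 <= delta -> 0 < eps ->
  (forall x, Q x -> is_dsubgrad Q f delta x (gf x)) ->
  (forall x, Q x -> is_dsubgrad Q g delta x (gg x)) ->
  (* xstar solves min f(x) s.t. x in Q, g(x) <= 0 *)
  Q xstar -> g xstar <= 0 -> (forall x, Q x -> g x <= 0 -> f xstar <= f x) ->
  (forall x, Q x -> dualn nrm (gg x) <= Mg) ->
  (* x^0 = argmin_{x in Q} d(x) *)
  Q (xs 0%N) -> (forall u, Q u -> d (xs 0%N) <= d u) ->
  0 < Theta0 -> bregman d xstar (xs 0%N) <= Theta0 ^+ 2 ->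
  (* Algorithm C: productive step at iteration k iff
     g(x^k) <= eps * ||grad_delta g(x^k)||_* + delta *)
  let productive k := g (xs k) <= eps * dualn nrm (gg (xs k)) + delta in
  (forall k, (k < N)%N ->
     if productive k then
       is_mirr Q d (xs k) ((eps / dualn nrm (gf (xs k))) *: gf (xs k)) (xs k.+1)
     else
       is_mirr Q d (xs k) ((eps / dualn nrm (gg (xs k))) *: gg (xs k)) (xs k.+1)) ->
  (* N = number of performed iterations when the algorithm stops:
     the least N with N >= 2 Theta0^2 / eps^2 *)
  2 * Theta0 ^+ 2 / eps ^+ 2 <= N%:R ->
  (forall m, (m < N)%N -> m%:R < 2 * Theta0 ^+ 2 / eps ^+ 2) ->
  (forall k, (k < N)%N -> productive k -> gf (xs k) != 0) ->
  (* I = [set k | k < N /\ productive k] *)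
  (exists k, (k < N)%N /\ productive k) /\
  (exists k, [/\ (k < N)%N, productive k & vfd nrm gf (xs k) xstar <= eps]) /\
  (forall k, (k < N)%N -> productive k -> g (xs k) <= Mg * eps + delta).
Proof.
move=> _ cQ hn hsc _ _ d0 e0 hsf hsg Qs gs _ hMg Q0 _ T0 V0 productive hstep hN _ hgf.
have Qk : forall k, (k <= N)%N -> Q (xs k).
  elim=> [//|k IH] hk.
  have hk' : (k < N)%N by [].
  by move: (hstep k hk'); case: ifP => _ [].
have third : forall k, (k < N)%N -> productive k -> g (xs k) <= Mg * eps + delta.
  move=> k hk; rewrite /productive => hp; apply: le_trans hp _.
  rewrite lerD2r mulrC ler_pM2r //; apply: hMg; apply: Qk; exact: ltnW.
suff second : exists k, [/\ (k < N)%N, productive k & vfd nrm gf (xs k) xstar <= eps].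
  split; last by split.
  by case: second => k [hk hp _]; exists k.
apply/not_existsP => hno.
pose V k := bregman d xstar (xs k).
have desc : forall k, (k < N)%N -> V k.+1 + eps ^+ 2 / 2 < V k.
  move=> k hk.
  have Qx := Qk k (ltnW hk).
  move: (hstep k hk); case: ifP => hp hm.
  - have s0 := hgf k hk hp.
    have ds := dual_pos hn s0.
    have hst := step_ineq cQ hn hsc Qx Qs ds e0 hm.
    have hv : eps < vfd nrm gf (xs k) xstar.
      by rewrite ltNge; apply/negP => hle; apply: (hno k); split.
    move: hv; rewrite /vfd (negbTE s0) dotvZl => hv.
    have h2 : eps * eps < eps / dualn nrm (gf (xs k)) * dotv (gf (xs k)) (xs k - xstar).
      by rewrite -mulrA ltr_pM2l.
    have h3 := lt_le_trans h2 hst.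
    rewrite /V; move: h3.
    generalize (bregman d xstar (xs k)) (bregman d xstar (xs k.+1)) => p q.
    rewrite !expr2; lra.
  - move/negbT: hp; rewrite /productive -ltNge => hp.
    have sub := hsg _ Qx xstar Qs.
    rewrite /is_dsubgrad in sub.
    have e3 : dotv (gg (xs k)) (xstar - xs k) = - dotv (gg (xs k)) (xs k - xstar).
      by rewrite -dotvNr opprB.
    rewrite e3 in sub.
    have s0 : gg (xs k) != 0.
      apply/eqP => s0; rewrite s0 in sub hp.
      have z : dotv (0 : 'rV[R]_n) (xs k - xstar) = 0.
        by rewrite /dotv big1 // => i _; rewrite mxE mul0r.
      rewrite z in sub.
      have := dual_ge0 (0 : 'rV[R]_n) hn => dz.
      have : 0 <= eps * dualn nrm 0 by rewrite mulr_ge0 // ltW.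
      lra.
    have ds := dual_pos hn s0.
    have hst := step_ineq cQ hn hsc Qx Qs ds e0 hm.
    have h4 : eps * dualn nrm (gg (xs k)) < dotv (gg (xs k)) (xs k - xstar) by lra.
    have h2 : eps * eps < eps / dualn nrm (gg (xs k)) * dotv (gg (xs k)) (xs k - xstar).
      have hpos : 0 < eps / dualn nrm (gg (xs k)) by rewrite divr_gt0.
      have := ltr_pM2l hpos; move=> /(_ _ _) H.
      rewrite -H in h4; move: h4; rewrite mulrCA mulfVK ?gt_eqF //.
    have h3 := lt_le_trans h2 hst.
    rewrite /V; move: h3.
    generalize (bregman d xstar (xs k)) (bregman d xstar (xs k.+1)) => p q.
    rewrite !expr2; lra.
have ind : forall m, (m <= N)%N -> V m + m%:R * (eps ^+ 2 / 2) <= V 0%N.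
  elim => [_|m IH hm]; first by rewrite mul0r addr0.
  have h1 := desc m hm; have h2 := IH (ltnW hm).
  move: h1 h2; rewrite -addn1 natrD mulrDl mul1r.
  generalize (V m) (V (m + 1)%N) (V 0%N) => a b c; lra.
have N0 : (0 < N)%N.
  rewrite lt0n; apply/eqP => N0; rewrite N0 in hN.
  have : 0 < 2 * Theta0 ^+ 2 / eps ^+ 2 by rewrite divr_gt0 ?mulr_gt0 ?exprn_gt0.
  lra.
have [m Nm] : exists m, N = m.+1 by exists N.-1; rewrite prednK.
have hm : (m < N)%N by rewrite Nm.
have h1 := desc m hm.
have h2 := ind m (ltnW hm).
have h3 := breg_sc hsc (Qk N (leqnn N)) Qs.
have h4 : 0 <= nrm (xstar - xs N) ^+ 2 / 2 by rewrite divr_ge0 ?sqr_ge0.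
rewrite ler_pdivrMr ?exprn_gt0 // in hN.
move: h1 h2 h3 h4 hN V0; rewrite /V Nm -addn1 natrD.
generalize (bregman d xstar (xs (m + 1)%N)) (bregman d xstar (xs m)) (bregman d xstar (xs 0%N)) => a b c.
generalize (nrm (xstar - xs (m + 1)%N) ^+ 2 / 2) (eps ^+ 2) (Theta0 ^+ 2) => p q r.
move=> h1 h2 h3 h4 h5 h6.
have : m%:R * (q / 2) = (m%:R * q) / 2 by rewrite mulrA.
rewrite [X in _ <= X]mulrDl mul1r in h5.
move: (m%:R * (q / 2)) (m%:R * q) h2 h5 => u v h2 h5 e.
lra.
Unshelve. all: by end_near.
Qed.
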